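(* Let $I$ be an open interval and $U$ a subgroup of $\mathrm{Homeo}^+(I)$ such that $U$ acts transitively on $I$, the commutator subgroup $[U,U]$ acts freely on $I$, and each non-identity member of $U$ has only finitely many fixed points. Then each non-identity member of $U$ has at most one fixed point.
   Context: $\mathrm{Homeo}^+(I)$ is the group of increasing homeomorphisms of $I$. $U$ acts transitively if for all $x,y\in I$ some $\varphi\in U$ has $\varphi(x)=y$. $[U,U]$ acts freely if no non-identity element of $[U,U]$ has a fixed point in $I$. *)

(* Defs.v *)
From Stdlib Require Import Reals List.
From Coquelicot Require Import Rbar.
Open Scope R_scope.

Definition is_open_interval (I : R -> Prop) : Prop :=
  exists a b : Rbar, Rbar_lt a b /\
    forall x, I x <-> (Rbar_lt a x /\ Rbar_lt x b).

(* Functions on I are represented by functions R -> R; only their values on I matter. *)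
Definition maps_into (I : R -> Prop) (f : R -> R) : Prop :=
  forall x, I x -> I (f x).

Definition inverse_on (I : R -> Prop) (f g : R -> R) : Prop :=
  maps_into I g /\ (forall x, I x -> g (f x) = x) /\ (forall x, I x -> f (g x) = x).

Definition homeo_plus (I : R -> Prop) (f : R -> R) : Prop :=
  maps_into I f /\
  (forall x y, I x -> I y -> x < y -> f x < f y) /\
  (forall x, I x -> continuity_pt f x) /\
  exists g, inverse_on I f g /\ forall y, I y -> continuity_pt g y.

(* U is a subgroup of Homeo^+(I) (elements compared by their action on I). *)
Definition is_subgroup_homeo (I : R -> Prop) (U : (R -> R) -> Prop) : Prop :=
  (forall f, U f -> homeo_plus I f) /\
  U (fun x => x) /\
  (forall f g, U f -> U g -> U (fun x => f (g x))) /\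
  (forall f, U f -> exists g, U g /\ inverse_on I f g).

Definition commutators (I : R -> Prop) (U : (R -> R) -> Prop) (h : R -> R) : Prop :=
  exists f g fi gi, U f /\ U g /\ U fi /\ U gi /\
    inverse_on I f fi /\ inverse_on I g gi /\
    h = (fun x => fi (gi (f (g x)))).

Inductive gen_subgroup (I : R -> Prop) (S : (R -> R) -> Prop) : (R -> R) -> Prop :=
| gen_base : forall h, S h -> gen_subgroup I S h
| gen_id : gen_subgroup I S (fun x => x)
| gen_comp : forall h k, gen_subgroup I S h -> gen_subgroup I S k ->
    gen_subgroup I S (fun x => h (k x))
| gen_inv : forall h k, gen_subgroup I S h -> inverse_on I h k -> gen_subgroup I S k.

Definition commutator_subgroup (I : R -> Prop) (U : (R -> R) -> Prop) :=
  gen_subgroup I (commutators I U).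

Definition is_identity_on (I : R -> Prop) (f : R -> R) : Prop :=
  forall x, I x -> f x = x.

Definition acts_transitively (I : R -> Prop) (U : (R -> R) -> Prop) : Prop :=
  forall x y, I x -> I y -> exists f, U f /\ f x = y.

Definition acts_freely (I : R -> Prop) (G : (R -> R) -> Prop) : Prop :=
  forall h, G h -> ~ is_identity_on I h -> forall x, I x -> h x <> x.

Definition finitely_many_fixed_points (I : R -> Prop) (f : R -> R) : Prop :=
  exists l : list R, forall x, I x -> f x = x -> In x l.

Definition at_most_one_fixed_point (I : R -> Prop) (f : R -> R) : Prop :=
  forall x y, I x -> I y -> f x = x -> f y = y -> x = y.

(* Main.v *)
Require Import Defs.
From Stdlib Require Import Reals List.
From Stdlib Require Import Classical Lra.

Lemma max_exists (P : R -> Prop) (l : list R) :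
  (forall x, P x -> In x l) -> forall x0, P x0 ->
  exists m, P m /\ forall y, P y -> y <= m.
Proof.
  revert P. induction l as [|c l IH]; intros P HP x0 H0.
  - destruct (HP x0 H0).
  - destruct (classic (exists x, P x /\ x <> c)) as [[x1 [H1 H2]]|Hn].
    + destruct (IH (fun y => P y /\ y <> c)) with x1 as [m [[Pm _] Hm]].
      * intros x [Px Hx]. destruct (HP x Px) as [E|E]; [congruence|auto].
      * auto.
      * destruct (classic (P c)) as [Pc|nPc].
        -- destruct (Rle_dec c m).
           ++ exists m. split; auto. intros y Py. destruct (Req_dec y c).
              subst; auto. apply Hm; auto.
           ++ exists c. split; auto. intros y Py. destruct (Req_dec y c). lra.
              specialize (Hm y (conj Py H)); lra.
        -- exists m; split; auto. intros y Py. apply Hm. split; auto.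
           intro; subst; contradiction.
    + exists x0. split; auto. intros y Py.
      assert (y = c) by (apply NNPP; intro; apply Hn; eauto).
      assert (x0 = c) by (apply NNPP; intro; apply Hn; eauto).
      subst; lra.
Qed.

Lemma key (I : R -> Prop) (U : (R -> R) -> Prop) :
  is_subgroup_homeo I U ->
  acts_transitively I U ->
  acts_freely I (commutator_subgroup I U) ->
  (forall f, U f -> ~ is_identity_on I f -> finitely_many_fixed_points I f) ->
  forall f, U f -> ~ is_identity_on I f -> forall a b, I a -> I b -> f a = a -> f b = b -> a < b -> False.
Proof.
  intros [Hh [Hid [Hcomp Hinv]]] Htr Hfree Hfin f Uf nid a b Ia Ib fa fb ab.
  destruct (Hfin f Uf nid) as [l Hl].
  destruct (max_exists (fun z => I z /\ f z = z) l) with b as [m [[Im fm] Hm]].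
  { intros z [Iz fz]; auto. } { auto. }
  assert (bm : b <= m) by (apply Hm; auto).
  destruct (Htr a m Ia Im) as [g [Ug ga]].
  destruct (Hinv f Uf) as [fi [Ufi [mfi [fif ffi]]]].
  destruct (Hinv g Ug) as [gi [Ugi [mgi [gig ggi]]]].
  destruct (Hh f Uf) as [mf [incf _]].
  destruct (Hh g Ug) as [mg [incg _]].
  set (h := fun x => fi (gi (f (g x)))).
  assert (Hc : commutator_subgroup I U h).
  { apply gen_base. exists f, g, fi, gi. repeat split; auto. }
  assert (ha : h a = a).
  { unfold h. rewrite ga, fm.
    assert (gi m = a) by (rewrite <- ga; apply gig; auto).
    rewrite H. rewrite <- fa at 1. apply fif; auto. }
  assert (Hidh : is_identity_on I h).
  { apply NNPP. intro N. exact (Hfree h Hc N a Ia ha). }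
  specialize (Hidh m Im). unfold h in Hidh.
  assert (E1 : gi (f (g m)) = m).
  { rewrite <- (ffi (gi (f (g m)))) by (apply mgi, mf, mg; auto).
    rewrite Hidh; exact fm. }
  assert (E2 : f (g m) = g m).
  { rewrite <- (ggi (f (g m))) by (apply mf, mg; auto). rewrite E1; reflexivity. }
  assert (g m <= m) by (apply Hm; auto).
  assert (g a < g m) by (apply incg; auto; lra).
  lra.
Qed.

Theorem lemma4p1 (I : R -> Prop) (U : (R -> R) -> Prop) :
  is_open_interval I ->
  is_subgroup_homeo I U ->
  acts_transitively I U ->
  acts_freely I (commutator_subgroup I U) ->
  (forall f, U f -> ~ is_identity_on I f -> finitely_many_fixed_points I f) ->
  forall f, U f -> ~ is_identity_on I f -> at_most_one_fixed_point I f.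
Proof.
  intros _ HU Htr Hfree Hfin f Uf nid x y Ix Iy fx fy.
  destruct (Rtotal_order x y) as [H|[H|H]]; auto.
  - exfalso; exact (key I U HU Htr Hfree Hfin f Uf nid x y Ix Iy fx fy H).
  - exfalso; exact (key I U HU Htr Hfree Hfin f Uf nid y x Iy Ix fy fx H).
Qed.
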